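(* Let $G_*$ be a crossed simplicial group with structural short exact sequence $1 \to P_* \to G_* \xrightarrow{\pi} N_* \to 1$, and let $\Gamma_n = G_n/\!\!/P_n$ be the action groupoids. For $0\le i\le n$ define $s_i\colon\Gamma_n\to\Gamma_{n+1}$ and $d_i\colon\Gamma_n\to\Gamma_{n-1}$ by $$s_i[\sigma,f]=[s_i(\sigma),\, s_{\sigma^{-1}(i)}(f^{-1})^{-1}],\qquad d_i[\sigma,f]=[d_i(\sigma),\, d_{\sigma^{-1}(i)}(f^{-1})^{-1}].$$ Then these maps are functors of groupoids and make $\{\Gamma_n\}_{n\ge0}$ a simplicial groupoid, i.e. they satisfy the simplicial identities.
   Context: A crossed simplicial group $G_*$ consists of groups $G_n$ ($n\ge0$), a left action of $G_n$ on $[n]=\{0,\dots,n\}$, and maps $d_i\colon G_n\to G_{n-1}$, $s_i\colon G_n\to G_{n+1}$ making $G_*$ a simplicial set, such that $d_i(gh)=d_i(g)d_{g^{-1}(i)}(h)$ and $s_i(gh)=s_i(g)s_{g^{-1}(i)}(h)$. Every crossed simplicial group fits into a canonical (structural) short exact sequence of crossed simplicial groups $1\to P_*\to G_*\xrightarrow{\pi}N_*\to1$, where $P_*$ is a simplicial group acting trivially on each $[n]$ (so the action of $G_n$ on $[n]$ factors through $N_n$) and $N_*$ is one of seven specific crossed simplicial groups. The action groupoid $\Gamma_n=G_n/\!\!/P_n$ has as objects the elements $\sigma$ of $G_n/P_n=N_n$, and a morphism $\sigma\to\sigma\pi(f)^{-1}$ for each $f\in G_n$, written $[\sigma,f]$;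 composition is $[\sigma\pi(f)^{-1},g]\cdot[\sigma,f]=[\sigma,gf]$. In the formulas, $s_i(\sigma), d_i(\sigma)$ are computed in $N_*$, $\sigma^{-1}(i)$ uses the action of $N_n$ on $[n]$, and the outer $s_j, d_j$ on $f^{-1}$ are those of $G_*$. *)

(* Defs.v *)
(* Groups G_n may be infinite, so we use MathComp's
   (not necessarily finite) [groupType] from boot/monoid.v. *)
From mathcomp Require Import all_boot.

Set Implicit Arguments.
Unset Strict Implicit.
Unset Printing Implicit Defensive.

Local Open Scope group_scope.

(* Indices are natural numbers; values for out-of-range indices are
   unconstrained junk and never used. *)

Record simplicial_identities (X : nat -> Type)
    (face : forall n, nat -> X n.+1 -> X n)
    (degen : forall n, nat -> X n -> X n.+1) : Prop := SimplicialIdentities {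
  si_dd : forall n i j (x : X n.+2), i < j -> j <= n.+2 ->
    face n i (face n.+1 j x) = face n j.-1 (face n.+1 i x);
  si_ss : forall n i j (x : X n), i <= j -> j <= n ->
    degen n.+1 i (degen n j x) = degen n.+1 j.+1 (degen n i x);
  si_ds_lt : forall n i j (x : X n.+1), i < j -> j <= n.+1 ->
    face n.+1 i (degen n.+1 j x) = degen n j.-1 (face n i x);
  si_ds_eq : forall n j (x : X n), j <= n -> face n j (degen n j x) = x;
  si_ds_eqS : forall n j (x : X n), j <= n -> face n j.+1 (degen n j x) = x;
  si_ds_gt : forall n i j (x : X n.+1), j.+1 < i -> i <= n.+2 ->
    face n.+1 i (degen n.+1 j x) = degen n j (face n i.-1 x)
}.

Record crossed_simplicial_group (G : nat -> groupType)
    (act : forall n, G n -> 'I_n.+1 -> 'I_n.+1)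
    (face : forall n, nat -> G n.+1 -> G n)
    (degen : forall n, nat -> G n -> G n.+1) : Prop := CrossedSimplicialGroup {
  csg_act1 : forall n (i : 'I_n.+1), act n 1 i = i;
  csg_actM : forall n (g h : G n) (i : 'I_n.+1), act n (g * h) i = act n g (act n h i);
  csg_simplicial : simplicial_identities face degen;
  csg_faceM : forall n (i : nat) (g h : G n.+1), i <= n.+1 ->
    face n i (g * h) = face n i g * face n (act n.+1 g^-1 (inord i)) h;
  csg_degenM : forall n (i : nat) (g h : G n), i <= n ->
    degen n i (g * h) = degen n i g * degen n (act n g^-1 (inord i)) h
}.

Record csg_morphism (G N : nat -> groupType)
    (actG : forall n, G n -> 'I_n.+1 -> 'I_n.+1)
    (faceG : forall n, nat -> G n.+1 -> G n)
    (degenG : forall n, nat -> G n -> G n.+1)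
    (actN : forall n, N n -> 'I_n.+1 -> 'I_n.+1)
    (faceN : forall n, nat -> N n.+1 -> N n)
    (degenN : forall n, nat -> N n -> N n.+1)
    (pi : forall n, G n -> N n) : Prop := CsgMorphism {
  csgm_mul : forall n (g h : G n), pi n (g * h) = pi n g * pi n h;
  csgm_face : forall n i (g : G n.+1), i <= n.+1 -> pi n (faceG n i g) = faceN n i (pi n.+1 g);
  csgm_degen : forall n i (g : G n), i <= n -> pi n.+1 (degenG n i g) = degenN n i (pi n g);
  csgm_act : forall n (g : G n) (i : 'I_n.+1), actN n (pi n g) i = actG n g i
}.

(* The action groupoid Gamma_n = G_n // P_n (P_n = ker pi_n).  Its objects
   are the elements sigma of N_n = G_n/P_n; a morphism [sigma, f] (f in G_n)
   is represented by the pair (sigma, f), with source sigma and target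
   sigma * pi(f)^{-1}. *)
Unset Implicit Arguments.
Section ActionGroupoid.
Variables (G N : nat -> groupType) (pi : forall n, G n -> N n).
Variable (actN : forall n, N n -> 'I_n.+1 -> 'I_n.+1).
Variables (faceG : forall n, nat -> G n.+1 -> G n) (degenG : forall n, nat -> G n -> G n.+1).
Variables (faceN : forall n, nat -> N n.+1 -> N n) (degenN : forall n, nat -> N n -> N n.+1).

Definition Gamma_mor (n : nat) : Type := (N n * G n)%type.

Definition Gamma_src n (m : Gamma_mor n) : N n := m.1.
Definition Gamma_tgt n (m : Gamma_mor n) : N n := m.1 * (pi n m.2)^-1.
Definition Gamma_id n (s : N n) : Gamma_mor n := (s, 1).
Definition Gamma_comp n (m2 m1 : Gamma_mor n) : Gamma_mor n := (m1.1, m2.2 * m1.2).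

Definition Gamma_face n (i : nat) (m : Gamma_mor n.+1) : Gamma_mor n :=
  (faceN n i m.1, (faceG n (actN n.+1 m.1^-1 (inord i)) m.2^-1)^-1).
Definition Gamma_degen n (i : nat) (m : Gamma_mor n) : Gamma_mor n.+1 :=
  (degenN n i m.1, (degenG n (actN n m.1^-1 (inord i)) m.2^-1)^-1).

End ActionGroupoid.
Set Implicit Arguments.

Definition coface (j k : nat) : nat := if k < j then k else k.+1.
Definition codegen (j k : nat) : nat := if k <= j then k else k.-1.

(* Compatibility of the action with faces/degeneracies as in the category
   Delta G (g o delta_{g^{-1}(i)} = delta_i o d_i(g),
             g o sigma_{g^{-1}(i)} = sigma_i o s_i(g), as maps of finite sets).
   This holds for each of the seven basic crossed simplicial groups N_*. *)
Record action_compatible (N : nat -> groupType)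
    (act : forall n, N n -> 'I_n.+1 -> 'I_n.+1)
    (face : forall n, nat -> N n.+1 -> N n)
    (degen : forall n, nat -> N n -> N n.+1) : Prop := ActionCompatible {
  ac_face : forall n (g : N n.+1) (i : nat) (k : 'I_n.+1), i <= n.+1 ->
    (act n.+1 g (inord (coface (act n.+1 g^-1 (inord i)) k)) : nat)
      = coface i (act n (face n i g) k);
  ac_degen : forall n (g : N n) (i : nat) (k : 'I_n.+2), i <= n ->
    (act n g (inord (codegen (act n g^-1 (inord i)) k)) : nat)
      = codegen i (act n.+1 (degen n i g) k)
}.

(* Main.v *)
Require Import Defs.
From mathcomp Require Import all_boot.
From mathcomp Require Import zify.

Local Open Scope group_scope.

Lemma coface_spec j k : (k < j /\ coface j k = k)%N \/ (j <= k /\ coface j k = k.+1)%N.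
Proof. rewrite /coface; case: ltnP; auto. Qed.

Lemma codegen_spec j k : (k <= j /\ codegen j k = k)%N \/ (j < k /\ codegen j k = k.-1)%N.
Proof. rewrite /codegen; case: leqP; auto. Qed.

Section Generic.
Variables (K : nat -> groupType) (act : forall n, K n -> 'I_n.+1 -> 'I_n.+1)
  (face : forall n, nat -> K n.+1 -> K n) (degen : forall n, nat -> K n -> K n.+1)
  (HK : crossed_simplicial_group act face degen).

Lemma face1 n j : (j <= n.+1)%N -> face n j 1 = 1.
Proof.
move=> Hj; have := csg_faceM HK (1 : K n.+1) 1 Hj.
rewrite mulg1 invg1 (csg_act1 HK) inordK // => E.
by apply: (@mulgI _ (face n j 1)); rewrite mulg1 -E.
Qed.

Lemma degen1 n j : (j <= n)%N -> degen n j 1 = 1.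
Proof.
move=> Hj; have := csg_degenM HK (1 : K n) 1 Hj.
rewrite mulg1 invg1 (csg_act1 HK) inordK // => E.
by apply: (@mulgI _ (degen n j 1)); rewrite mulg1 -E.
Qed.

Lemma act_inv n (g : K n) x : act n g^-1 (act n g x) = x.
Proof. by rewrite -(csg_actM HK) mulVg (csg_act1 HK). Qed.

Lemma act_inv' n (g : K n) x : act n g (act n g^-1 x) = x.
Proof. by rewrite -(csg_actM HK) mulgV (csg_act1 HK). Qed.

Lemma ainv_inj n (g : K n) x y : (x <= n)%N -> (y <= n)%N ->
  (act n g^-1 (inord x) : nat) = act n g^-1 (inord y) -> x = y.
Proof.
move=> Hx Hy /val_inj /(congr1 (act n g)); rewrite !act_inv' => /(congr1 val).
by rewrite /= !inordK.
Qed.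

Lemma G_dd n (h : K n.+2) a b c c' : (a <= n.+2)%N -> (b <= n.+2)%N -> a <> b ->
  (c <= n.+1)%N -> (c' <= n.+1)%N -> coface a c = b -> coface b c' = a ->
  face n c (face n.+1 a h) = face n c' (face n.+1 b h).
Proof.
move=> Ha Hb Hab Hc Hc' E1 E2.
have S := csg_simplicial HK.
case: (ltngtP a b) => Hlt; last by [].
- have -> : c = b.-1 by case: (coface_spec a c) E1 => [[? ?]|[? ?]]; lia.
  have -> : c' = a by case: (coface_spec b c') E2 => [[? ?]|[? ?]]; lia.
  by rewrite [RHS](si_dd S) //; lia.
- have -> : c = b by case: (coface_spec a c) E1 => [[? ?]|[? ?]]; lia.
  have -> : c' = a.-1 by case: (coface_spec b c') E2 => [[? ?]|[? ?]]; lia.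
  by rewrite (si_dd S) //; lia.
Qed.

Lemma G_ss n (h : K n) a b c c' : (a <= n)%N -> (b <= n)%N ->
  (c <= n.+1)%N -> (c' <= n.+1)%N -> codegen a c = b -> codegen b c' = a ->
  (a = b -> c <> c') ->
  degen n.+1 c (degen n a h) = degen n.+1 c' (degen n b h).
Proof.
move=> Ha Hb Hc Hc' E1 E2 Hne.
have S := csg_simplicial HK.
case: (ltngtP a b) => Hlt.
- have -> : c = b.+1 by case: (codegen_spec a c) E1 => [[? ?]|[? ?]]; lia.
  have -> : c' = a by case: (codegen_spec b c') E2 => [[? ?]|[? ?]]; lia.
  by rewrite [RHS](si_ss S) //; lia.
- have -> : c = b by case: (codegen_spec a c) E1 => [[? ?]|[? ?]]; lia.
  have -> : c' = a.+1 by case: (codegen_spec b c') E2 => [[? ?]|[? ?]]; lia.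
  by rewrite (si_ss S) //; lia.
- have Hne' := Hne Hlt; rewrite -Hlt in E1 E2 *.
  have [[-> ->]|[-> ->]] : (c = a /\ c' = a.+1) \/ (c = a.+1 /\ c' = a).
    by case: (codegen_spec a c) E1 => [[? ?]|[? ?]];
       case: (codegen_spec a c') E2 => [[? ?]|[? ?]]; lia.
  + by rewrite (si_ss S) //; lia.
  + by rewrite [RHS](si_ss S) //; lia.
Qed.

Lemma G_ds n (h : K n.+1) a b c c' : (a <= n.+1)%N -> (b <= n.+1)%N -> a <> b ->
  (c <= n.+2)%N -> (c' <= n)%N -> codegen a c = b -> coface b c' = a ->
  face n.+1 c (degen n.+1 a h) = degen n c' (face n b h).
Proof.
move=> Ha Hb Hab Hc Hc' E1 E2.
have S := csg_simplicial HK.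
case: (ltngtP a b) => Hlt; last by [].
- have -> : c = b.+1 by case: (codegen_spec a c) E1 => [[? ?]|[? ?]]; lia.
  have -> : c' = a by case: (coface_spec b c') E2 => [[? ?]|[? ?]]; lia.
  by rewrite (si_ds_gt S) //; lia.
- have -> : c = b by case: (codegen_spec a c) E1 => [[? ?]|[? ?]]; lia.
  have -> : c' = a.-1 by case: (coface_spec b c') E2 => [[? ?]|[? ?]]; lia.
  by rewrite (si_ds_lt S) //; lia.
Qed.

Lemma G_dseq n (h : K n) a c : (a <= n)%N -> (c <= n.+1)%N -> codegen a c = a ->
  face n c (degen n a h) = h.
Proof.
move=> Ha Hc E.
have S := csg_simplicial HK.
have [->|->] : c = a \/ c = a.+1 by case: (codegen_spec a c) E => [[? ?]|[? ?]]; lia.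
- by rewrite (si_ds_eq S).
- by rewrite (si_ds_eqS S).
Qed.

End Generic.

Section Idx.
Variables (N : nat -> groupType) (actN : forall n, N n -> 'I_n.+1 -> 'I_n.+1)
  (faceN : forall n, nat -> N n.+1 -> N n) (degenN : forall n, nat -> N n -> N n.+1)
  (HN : crossed_simplicial_group actN faceN degenN)
  (HNc : action_compatible actN faceN degenN).

Lemma face_idx n (s : N n.+1) i x : (i <= n.+1)%N -> (x <= n)%N ->
  coface (actN n.+1 s^-1 (inord i)) (actN n (faceN n i s)^-1 (inord x))
  = actN n.+1 s^-1 (inord (coface i x)).
Proof.
move=> Hi Hx.
set k := actN n (faceN n i s)^-1 (inord x).
have := ac_face HNc s k Hi.
rewrite /k (@act_inv' _ _ _ _ HN) inordK // -/k => H.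
have Hb : (coface i x < n.+2)%N by case: (coface_spec i x) => [[? ->]|[? ->]]; lia.
have Hb2 : (coface (actN n.+1 s^-1 (inord i)) k < n.+2)%N.
  have := ltn_ord k; case: (coface_spec (actN n.+1 s^-1 (inord i)) k) => [[? ->]|[? ->]]; lia.
have E : inord (coface i x) = actN n.+1 s (inord (coface (actN n.+1 s^-1 (inord i)) k)) :> 'I_n.+2.
  by apply: val_inj; rewrite /= inordK // H.
by rewrite E (@act_inv _ _ _ _ HN) inordK.
Qed.

Lemma degen_idx n (s : N n) i x : (i <= n)%N -> (x <= n.+1)%N ->
  codegen (actN n s^-1 (inord i)) (actN n.+1 (degenN n i s)^-1 (inord x))
  = actN n s^-1 (inord (codegen i x)).
Proof.
move=> Hi Hx.
set k := actN n.+1 (degenN n i s)^-1 (inord x).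
have := ac_degen HNc s k Hi.
rewrite /k (@act_inv' _ _ _ _ HN) inordK // -/k => H.
have Hb : (codegen i x < n.+1)%N by case: (codegen_spec i x) => [[? ->]|[? ->]]; lia.
have Hb2 : (codegen (actN n s^-1 (inord i)) k < n.+1)%N.
  have := ltn_ord k; have := ltn_ord (actN n s^-1 (inord i)).
  case: (codegen_spec (actN n s^-1 (inord i)) k) => [[? ->]|[? ->]]; lia.
have E : inord (codegen i x) = actN n s (inord (codegen (actN n s^-1 (inord i)) k)) :> 'I_n.+1.
  by apply: val_inj; rewrite /= inordK // H.
by rewrite E (@act_inv _ _ _ _ HN) inordK.
Qed.

End Idx.

Lemma ordle n (x : 'I_n.+1) : (x <= n)%N.
Proof. by rewrite -ltnS. Qed.

Lemma coface_lt j k : (k < j)%N -> coface j k = k.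
Proof. by rewrite /coface => ->. Qed.
Lemma coface_ge j k : (j <= k)%N -> coface j k = k.+1.
Proof. by move=> H; rewrite /coface ltnNge H. Qed.
Lemma codegen_le j k : (k <= j)%N -> codegen j k = k.
Proof. by rewrite /codegen => ->. Qed.
Lemma codegen_gt j k : (j < k)%N -> codegen j k = k.-1.
Proof. by move=> H; rewrite /codegen leqNgt H. Qed.

Theorem lemma1p8
    (G N : nat -> groupType)
    (actG : forall n, G n -> 'I_n.+1 -> 'I_n.+1)
    (faceG : forall n, nat -> G n.+1 -> G n)
    (degenG : forall n, nat -> G n -> G n.+1)
    (actN : forall n, N n -> 'I_n.+1 -> 'I_n.+1)
    (faceN : forall n, nat -> N n.+1 -> N n)
    (degenN : forall n, nat -> N n -> N n.+1)
    (pi : forall n, G n -> N n)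
    (HG : crossed_simplicial_group actG faceG degenG)
    (HN : crossed_simplicial_group actN faceN degenN)
    (HNc : action_compatible actN faceN degenN)
    (Hpi : csg_morphism actG faceG degenG actN faceN degenN pi)
    (Hsurj : forall n (s : N n), exists g : G n, pi n g = s) :
  let Mor := Gamma_mor G N in
  let src := Gamma_src G N in
  let tgt := Gamma_tgt G N pi in
  let idm := Gamma_id G N in
  let comp := Gamma_comp G N in
  let d := Gamma_face G N actN faceG faceN in
  let s := Gamma_degen G N actN degenG degenN in
  (* each d_i : Gamma_{n+1} -> Gamma_n (0 <= i <= n+1) is a functor *)
  (forall n i, i <= n.+1 ->
     (forall m : Mor n.+1,
        src n (d n i m) = faceN n i (src n.+1 m) /\
        tgt n (d n i m) = faceN n i (tgt n.+1 m)) /\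
     (forall sigma : N n.+1, d n i (idm n.+1 sigma) = idm n (faceN n i sigma)) /\
     (forall m2 m1 : Mor n.+1, src n.+1 m2 = tgt n.+1 m1 ->
        d n i (comp n.+1 m2 m1) = comp n (d n i m2) (d n i m1))) /\
  (* each s_i : Gamma_n -> Gamma_{n+1} (0 <= i <= n) is a functor *)
  (forall n i, i <= n ->
     (forall m : Mor n,
        src n.+1 (s n i m) = degenN n i (src n m) /\
        tgt n.+1 (s n i m) = degenN n i (tgt n m)) /\
     (forall sigma : N n, s n i (idm n sigma) = idm n.+1 (degenN n i sigma)) /\
     (forall m2 m1 : Mor n, src n m2 = tgt n m1 ->
        s n i (comp n m2 m1) = comp n.+1 (s n i m2) (s n i m1))) /\
  (* the simplicial identities, on objects and on morphisms *)
  simplicial_identities faceN degenN /\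
  simplicial_identities (X := Mor) d s.
Proof.
move=> Mor src tgt idm comp d s.
have pi1 : forall n, pi n 1 = 1.
  move=> n; apply: (@mulgI _ (pi n 1)); by rewrite -(csgm_mul Hpi) !mulg1.
have piV : forall n (g : G n), pi n g^-1 = (pi n g)^-1.
  move=> n g; apply: esym; apply: mulg1_eq; by rewrite -(csgm_mul Hpi) mulgV pi1.
have SN := csg_simplicial HN.
have SG := csg_simplicial HG.
split; [|split; [|split]].
- move=> n i Hi; split; [|split].
  + case=> sg f; split; first by [].
    rewrite /tgt /Gamma_tgt /d /Gamma_face /=.
    rewrite (csg_faceM HN) // piV invgK (csgm_face Hpi) ?piV //.
    exact: ordle.
  + move=> sg; rewrite /d /idm /Gamma_face /Gamma_id /= invg1 (@face1 _ _ _ _ HG) ?invg1 //.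
    exact: ordle.
  + case=> s2 g [s1 f]; rewrite /src /tgt /Gamma_src /Gamma_tgt /= => H.
    rewrite /d /comp /Gamma_face /Gamma_comp /=; congr pair.
    rewrite invgM (csg_faceM HG); last exact: ordle.
    rewrite invgM; congr (_ * _); congr (_^-1); congr (faceG _ _ _).
    by rewrite invgK inord_val -(csgm_act Hpi) -(csg_actM HN) H invgM invgK.
- move=> n i Hi; split; [|split].
  + case=> sg f; split; first by [].
    rewrite /tgt /Gamma_tgt /s /Gamma_degen /=.
    rewrite (csg_degenM HN) // piV invgK (csgm_degen Hpi) ?piV //.
    exact: ordle.
  + move=> sg; rewrite /s /idm /Gamma_degen /Gamma_id /= invg1 (@degen1 _ _ _ _ HG) ?invg1 //.
    exact: ordle.
  + case=> s2 g [s1 f]; rewrite /src /tgt /Gamma_src /Gamma_tgt /= => H.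
    rewrite /s /comp /Gamma_degen /Gamma_comp /=; congr pair.
    rewrite invgM (csg_degenM HG); last exact: ordle.
    rewrite invgM; congr (_ * _); congr (_^-1); congr (degenG _ _ _).
    by rewrite invgK inord_val -(csgm_act Hpi) -(csg_actM HN) H invgM invgK.
- exact: SN.
- rewrite /d /s /Gamma_face /Gamma_degen; split.
  + move=> n i j [sg f] Hij Hj /=; congr pair; first exact: (si_dd SN).
    rewrite !invgK; congr (_^-1).
    apply: (@G_dd _ _ _ _ HG); try exact: ordle.
    * move=> E; have := @ainv_inj _ _ _ _ HN _ sg j i Hj ltac:(lia) E; lia.
    * rewrite (@face_idx _ _ _ _ HN HNc) ?coface_lt //; lia.
    * rewrite (@face_idx _ _ _ _ HN HNc) ?coface_ge //; try lia.
      by rewrite prednK //; lia.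
  + move=> n i j [sg f] Hij Hj /=; congr pair; first exact: (si_ss SN).
    rewrite !invgK; congr (_^-1).
    apply: (@G_ss _ _ _ _ HG); try exact: ordle.
    * rewrite (@degen_idx _ _ _ _ HN HNc) ?codegen_le //; lia.
    * rewrite (@degen_idx _ _ _ _ HN HNc) ?codegen_gt //; lia.
    * move=> E; have Eij := @ainv_inj _ _ _ _ HN _ sg j i Hj ltac:(lia) E.
      subst j => E2.
      have := @ainv_inj _ _ _ _ HN _ (degenN n i sg) i i.+1 ltac:(lia) ltac:(lia) E2; lia.
  + move=> n i j [sg f] Hij Hj /=; congr pair; first exact: (si_ds_lt SN).
    rewrite !invgK; congr (_^-1).
    apply: (@G_ds _ _ _ _ HG); try exact: ordle.
    * move=> E; have := @ainv_inj _ _ _ _ HN _ sg j i Hj ltac:(lia) E; lia.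
    * rewrite (@degen_idx _ _ _ _ HN HNc) ?codegen_le //; lia.
    * rewrite (@face_idx _ _ _ _ HN HNc) ?coface_ge //; try lia.
      by rewrite prednK //; lia.
  + move=> n j [sg f] Hj /=; congr pair; first exact: (si_ds_eq SN).
    rewrite !invgK (@G_dseq _ _ _ _ HG) ?invgK //; try exact: ordle.
    rewrite (@degen_idx _ _ _ _ HN HNc) ?codegen_le //; lia.
  + move=> n j [sg f] Hj /=; congr pair; first exact: (si_ds_eqS SN).
    rewrite !invgK (@G_dseq _ _ _ _ HG) ?invgK //; try exact: ordle.
    rewrite (@degen_idx _ _ _ _ HN HNc) ?codegen_gt //; lia.
  + move=> n i j [sg f] Hij Hj /=; congr pair; first exact: (si_ds_gt SN).
    rewrite !invgK; congr (_^-1).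
    apply: (@G_ds _ _ _ _ HG); try exact: ordle.
    * move=> E; have := @ainv_inj _ _ _ _ HN _ sg j i.-1 ltac:(lia) ltac:(lia) E; lia.
    * rewrite (@degen_idx _ _ _ _ HN HNc) ?codegen_gt //; lia.
    * rewrite (@face_idx _ _ _ _ HN HNc) ?coface_lt //; lia.
Qed.
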